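(* Let $X$ be a quasi-Banach function space over $\mathbf{R}^d$ with the Fatou property and let $T$ be a non-degenerate (sub)linear operator for which $T:X\to X_{\mathrm{weak}}$ is bounded. Then $X\in A$ with \[[X]_A\le C^{-2}\|T\|_{X\to X_{\mathrm{weak}}}^2,\] where $C$ is the constant in the definition of non-degeneracy.
   Context: Cubes are axis-parallel cubes in $\mathbf{R}^d$. A quasi-Banach function space over $\mathbf{R}^d$ is a complete quasi-normed space $X\subseteq L^0(\mathbf{R}^d)$ with the ideal property (if $f\in X$, $|g|\le|f|$ then $g\in X$, $\|g\|_X\le\|f\|_X$) and the saturation property (every set of positive measure contains a subset $F$ of positive measure with $\mathbf{1}_F\in X$). Köthe dual: $\|g\|_{X'}=\sup_{\|f\|_X=1}\int|fg|$. Fatou property: $0\le f_n\uparrow f$ a.e., $\sup\|f_n\|_X<\infty$ imply $f\in X$, $\|f\|_X=\sup\|f_n\|_X$. $X_{\mathrm{weak}}$: $f$ with $\mathbf{1}_{\{|f|>\lambda\}}\in X$ for all $\lambda>0$, $\|f\|_{X_{\mathrm{weak}}}=\sup_\lambda\lambda\|\mathbf{1}_{\{|f|>\lambda\}}\|_X<\infty$. $X\in A$: $\mathbf{1}_Q\in X$ and $\mathbf{1}_Q\in X'$ for all cubes $Q$ and $[X]_A=\sup_Q|Q|^{-1}\|\mathbf{1}_Q\|_X\|\mathbf{1}_Q\|_{X'}<\infty$. An operator $T$ is non-degenerate if there is $C>0$ such that for every $\ell>0$ there is $x_\ell\in\mathbf{R}^d$ such that for all cubes $Q$ of side length $\ell$,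 all $0\le f\in L^1(Q)$ and all $x\in(Q+x_\ell)\cup(Q-x_\ell)$: $|Tf(x)|\ge C\frac1{|Q|}\int_Qf$. *)

(* Defs.v *)
From HB Require Import structures.
From mathcomp Require Import all_boot all_order all_algebra.
From mathcomp Require Import all_classical all_reals all_analysis.

Set Implicit Arguments.
Unset Strict Implicit.
Unset Printing Implicit Defensive.
Import Order.TTheory GRing.Theory Num.Theory.
Import numFieldNormedType.Exports.
Local Open Scope classical_set_scope.
Local Open Scope ring_scope.

(* Lebesgue measure on R^d = 'rV[R]_d, built by the textbook Caratheodory    *)
(* construction: the outer measure lambda^*(A) = inf sum_k vol(B_k) over     *)
(* countable covers of A by half-open boxes B_k = prod_i [a_i, b_i), and the *)
(* Lebesgue sigma-algebra = Caratheodory-measurable sets of lambda^*.        *)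

Section LebesgueRd.
Variables (R : realType) (d : nat).

Definition hbox (a b : 'rV[R]_d) : set 'rV[R]_d :=
  [set x | forall i : 'I_d, a 0 i <= x 0 i < b 0 i].

(* auxiliary copy of R^d in which every set is "measurable", used only to  *)
(* feed the generic outer-measure construction mu_ext (inf over covers)    *)
Definition Rd_all := 'rV[R]_d.
HB.instance Definition _ := Pointed.on Rd_all.
HB.instance Definition _ := @isMeasurable.Build default_measure_display Rd_all
  setT I (fun _ _ => I) (fun _ _ => I).

(* volume of a set that is a box (with a <= b); +oo for non-boxes, 0 for set0 *)
Definition box_content (A : set Rd_all) : \bar R :=
  if asbool (A = set0) then 0%E
  else ereal_inf [set (\prod_(i < d) (ab.2 0 i - ab.1 0 i))%:E
                 | ab in [set ab : 'rV[R]_d * 'rV[R]_d |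
                     (forall i, ab.1 0 i <= ab.2 0 i) /\ A = hbox ab.1 ab.2]].

Lemma box_content0 : box_content (set0 : set Rd_all) = 0%E.
Proof. by rewrite /box_content asboolT. Qed.

Lemma box_content_ge0 (A : set Rd_all) : (0 <= box_content A)%E.
Proof.
rewrite /box_content; case: asboolP => // _.
apply: le_ereal_inf_tmp => _ [[a b] [ab _] <-].
rewrite lee_fin; apply: prodr_ge0 => i _; by rewrite subr_ge0.
Qed.

Definition lebesgue_outer : set Rd_all -> \bar R := mu_ext box_content.

HB.instance Definition _ := isOuterMeasure.Build R Rd_all lebesgue_outer
  (mu_ext0 box_content0 box_content_ge0) (mu_ext_ge0 box_content_ge0)
  (le_mu_ext box_content) (mu_ext_sigma_subadditive box_content_ge0).

Definition lebesgue_outer_measure : {outer_measure set Rd_all -> \bar R} :=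
  lebesgue_outer.

Definition Rd := caratheodory_type lebesgue_outer_measure.

Definition lebesgue_Rd : {measure set Rd -> \bar R} :=
  (lebesgue_outer_measure : set Rd -> \bar R).

End LebesgueRd.

Section FunctionSpaces.
Local Open Scope ereal_scope.
Variables (R : realType) (d : nat).
Local Notation Rd := (Rd R d).
Local Notation lebesgue_Rd := (lebesgue_Rd R d).

Definition cube (a : 'rV[R]_d) (l : R) : set Rd :=
  [set x : Rd | forall i : 'I_d, (a 0 i <= (x : 'rV[R]_d) 0 i < a 0 i + l)%R].

Definition cube_vol (l : R) : R := (l ^+ d)%R.

Definition translate_set (Q : set Rd) (z : 'rV[R]_d) : set Rd :=
  [set x : Rd | Q ((x : 'rV[R]_d) - z)%R].

(* X is given by its elements inX (functions, i.e. representatives of      *)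
(* elements of L^0) and its quasi-norm nX (only meaningful on inX).        *)
Record quasi_banach_function_space (inX : set (Rd -> R))
    (nX : (Rd -> R) -> R) : Prop := QBFS {
  qbfs_measurable : forall f, inX f -> measurable_fun setT f ;
  qbfs_zero : inX (fun=> 0%R) ;
  qbfs_add : forall f g, inX f -> inX g -> inX (f \+ g)%R%R ;
  qbfs_scale : forall (c : R) f, inX f -> inX (fun x => c * f x)%R ;
  qbfs_ge0 : forall f, inX f -> (0 <= nX f)%R ;
  qbfs_definite : forall f, inX f ->
    (nX f = 0%R <-> {ae lebesgue_Rd, forall x, f x = 0%R}) ;
  qbfs_homogeneous : forall (c : R) f, inX f ->
    nX (fun x => c * f x)%R = (`|c| * nX f)%R ;
  qbfs_quasi_triangle : exists K : R, (1 <= K)%R /\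
    forall f g, inX f -> inX g -> (nX (f \+ g)%R <= K * (nX f + nX g))%R ;
  qbfs_complete : forall u : nat -> Rd -> R, (forall n, inX (u n)) ->
    (forall e : R, (0 < e)%R -> exists M : nat, forall m n, (M <= m)%N ->
       (M <= n)%N -> (nX (u m \- u n)%R < e)%R) ->
    exists f, inX f /\ nX (u n \- f)%R @[n --> \oo] --> 0%R ;
  qbfs_ideal : forall f g : Rd -> R, inX f -> measurable_fun setT g ->
    {ae lebesgue_Rd, forall x, (`|g x| <= `|f x|)%R} -> inX g /\ (nX g <= nX f)%R ;
  qbfs_saturation : forall E : set Rd, measurable E -> 0 < lebesgue_Rd E ->
    exists F : set Rd, [/\ measurable F, F `<=` E, 0 < lebesgue_Rd F & inX (\1_F)]
}.

Definition fatou_property (inX : set (Rd -> R)) (nX : (Rd -> R) -> R) :=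
  forall (u : nat -> Rd -> R) (f : Rd -> R),
    (forall n, inX (u n)) ->
    {ae lebesgue_Rd, forall x, (forall n, 0 <= u n x <= u n.+1 x)%R /\
                       u ^~ x @ \oo --> f x} ->
    (exists M : R, forall n, (nX (u n) <= M)%R) ->
    inX f /\ (nX f)%:E = ereal_sup (range (fun n => (nX (u n))%:E)).

Definition kothe_norm (inX : set (Rd -> R)) (nX : (Rd -> R) -> R)
    (g : Rd -> R) : \bar R :=
  ereal_sup [set \int[lebesgue_Rd]_x (`|f x * g x|)%:E
            | f in [set f | inX f /\ nX f = 1%R]].

Definition in_kothe_dual inX nX (g : Rd -> R) :=
  measurable_fun setT g /\ kothe_norm inX nX g < +oo.

Definition weak_norm (nX : (Rd -> R) -> R) (f : Rd -> R) : \bar R :=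
  ereal_sup [set (lam * nX (\1_[set x | lam < `|f x|]))%:E
            | lam in [set lam : R | (0 < lam)%R]].

Definition in_weak (inX : set (Rd -> R)) nX (f : Rd -> R) :=
  [/\ measurable_fun setT f,
      (forall lam : R, (0 < lam)%R -> inX (\1_[set x | lam < `|f x|]%R)) &
      weak_norm nX f < +oo].

Definition in_A (inX : set (Rd -> R)) nX :=
  forall (a : 'rV[R]_d) (l : R), (0 < l)%R ->
    inX (\1_(cube a l)) /\ in_kothe_dual inX nX (\1_(cube a l)).

Definition A_const (inX : set (Rd -> R)) nX : \bar R :=
  ereal_sup [set ((cube_vol al.2)^-1 * nX (\1_(cube al.1 al.2)))%:E
                 * kothe_norm inX nX (\1_(cube al.1 al.2))
            | al in [set al : 'rV[R]_d * R | (0 < al.2)%R]].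

Definition sublinear_on (inX : set (Rd -> R)) (T : (Rd -> R) -> Rd -> R) :=
  (forall f g, inX f -> inX g -> forall x,
     (`|T (f \+ g)%R x| <= `|T f x| + `|T g x|)%R) /\
  (forall (c : R) f, inX f -> forall x,
     (`|T (fun y => c * f y) x| = `|c| * `|T f x|)%R).

Definition bounded_to_weak (inX : set (Rd -> R)) nX
    (T : (Rd -> R) -> Rd -> R) (N : R) :=
  forall f, inX f -> in_weak inX nX (T f) /\
    weak_norm nX (T f) <= (N * nX f)%:E.

Definition nondegenerate_op (T : (Rd -> R) -> Rd -> R) (C : R) :=
  (0 < C)%R /\
  forall l : R, (0 < l)%R -> exists xl : 'rV[R]_d,
    forall (a : 'rV[R]_d) (f : Rd -> R),
      (forall x, 0 <= f x)%R ->
      (forall x, ~ cube a l x -> f x = 0%R) ->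
      lebesgue_Rd.-integrable (cube a l) (EFin \o f) ->
      forall x, translate_set (cube a l) xl x \/ translate_set (cube a l) (- xl)%R x ->
        (C / cube_vol l)%:E * \int[lebesgue_Rd]_(y in cube a l) (f y)%:E
          <= (`|T f x|)%:E.

End FunctionSpaces.

(* Main.v *)
Require Import Defs.
From HB Require Import structures.
From mathcomp Require Import all_boot all_order all_algebra.
From mathcomp Require Import all_classical all_reals all_analysis.
From mathcomp Require Import measurable_realfun unstable.
From mathcomp Require Import ring.
Set Implicit Arguments. Unset Strict Implicit. Unset Printing Implicit Defensive.
Import Order.TTheory GRing.Theory Num.Theory.
Import numFieldNormedType.Exports.
Local Open Scope classical_set_scope.
Local Open Scope ring_scope.
Section Vol.
Variables (R : realType) (d : nat).

Definition ind (a b t : R) : R := if (a <= t < b) then 1 else 0.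
Definition Fn (n : nat) (a b x : 'rV[R]_d) : R :=
  (\prod_(i < d | (n <= i)%N) ind (a 0 i) (b 0 i) (x 0 i)) *
   \prod_(i < d | (i < n)%N) (b 0 i - a 0 i).
Definition Gn (n : nat) (a b x : 'rV[R]_d) : R :=
  (\prod_(i < d | (n < i)%N) ind (a 0 i) (b 0 i) (x 0 i)) *
   \prod_(i < d | (i < n)%N) (b 0 i - a 0 i).
Definition upd (j : 'I_d) (x : 'rV[R]_d) (t : R) : 'rV[R]_d :=
  \row_(i < d) (if i == j then t else x 0 i).

Lemma ind_ge0 a b t : 0 <= ind a b t.
Proof. by rewrite /ind; case: ifP. Qed.

Lemma Fn_step n (j : 'I_d) (hj : nat_of_ord j = n) a b x t :
  Fn n a b (upd j x t) = ind (a 0 j) (b 0 j) t * Gn n a b x.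
Proof.
rewrite /Fn /Gn (bigD1 j) /=; last by rewrite hj.
rewrite !mxE eqxx mulrA; congr (_ * _ * _).
apply: eq_big => i.
  by rewrite -hj ltn_neqAle andbC; congr (_ && _); rewrite eq_sym.
by move=> /andP[_ /negbTE ine]; rewrite mxE ine.
Qed.

Lemma Fn_succ n (j : 'I_d) (hj : nat_of_ord j = n) (a b x : 'rV[R]_d) :
  Fn n.+1 a b x = (b 0 j - a 0 j) * Gn n a b x.
Proof.
rewrite /Fn /Gn (bigD1 j (P := fun i : 'I_d => (i < n.+1)%N)) /=; last by rewrite hj.
rewrite mulrCA; congr (_ * _); congr (_ * _).
apply: eq_bigl => i; rewrite -val_eqE /= -hj ltnS.
by case: (ltngtP i j).
Qed.

Lemma Fn_ge0 n (a b x : 'rV[R]_d) : (forall i, a 0 i <= b 0 i) -> 0 <= Fn n a b x.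
Proof.
move=> hab; rewrite /Fn; apply: mulr_ge0; apply: prodr_ge0 => i _.
  exact: ind_ge0.
by rewrite subr_ge0.
Qed.

Lemma Gn_ge0 n (a b x : 'rV[R]_d) : (forall i, a 0 i <= b 0 i) -> 0 <= Gn n a b x.
Proof.
move=> hab; rewrite /Gn; apply: mulr_ge0; apply: prodr_ge0 => i _.
  exact: ind_ge0.
by rewrite subr_ge0.
Qed.
End Vol.
Section Int1.
Variable R : realType.
Local Open Scope ereal_scope.

Lemma ind_indic (a b t : R) : ind a b t = \1_(`[a, b[%classic) t.
Proof. by rewrite /ind indicE mem_setE in_itv /=; case: (a <= t < b)%R. Qed.

Lemma mind (a b G : R) : measurable_fun setT (fun t => (ind a b t * G)%R%:E).
Proof.
apply/measurable_EFinP; apply: measurable_funM => //.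
rewrite (_ : ind a b = \1_(`[a, b[%classic)); last by apply/funext => t; rewrite ind_indic.
exact: measurable_indic.
Qed.

Lemma int_ind (a b G : R) : (a <= b)%R -> (0 <= G)%R ->
  \int[lebesgue_measure]_(t in setT) (ind a b t * G)%R%:E = ((b - a) * G)%R%:E.
Proof.
move=> ab G0.
under eq_integral do rewrite ind_indic EFinM muleC.
rewrite ge0_integralZl//; last first.
  by apply/measurable_EFinP; exact: measurable_indic.
rewrite (integral_indic _ measurableT)// setIT.
have := lebesgue_measure_itv `[a, b[. move=> /= ->. rewrite lte_fin.
case: ltgtP ab => // [ab _|-> _]; first by rewrite muleC -EFinB -EFinM.
by rewrite subrr mul0r mule0.
Qed.
End Int1.
Section Claim.
Variables (R : realType) (d : nat).
Local Open Scope ereal_scope.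

Lemma mFn n (j : 'I_d) (hj : nat_of_ord j = n) (a b x : 'rV[R]_d) :
  measurable_fun setT (fun t : R => (Fn n a b (upd j x t))%:E).
Proof.
rewrite (_ : (fun t : R => _) = (fun t => (ind (a 0 j) (b 0 j) t * Gn n a b x)%R%:E)).
  exact: mind.
by apply/funext => t; rewrite (Fn_step hj).
Qed.

Lemma intFn n (j : 'I_d) (hj : nat_of_ord j = n) (a b x : 'rV[R]_d) :
  (forall i, (a 0 i <= b 0 i)%R) ->
  \int[lebesgue_measure]_(t in setT) (Fn n a b (upd j x t))%:E = (Fn n.+1 a b x)%:E.
Proof.
move=> hab.
under eq_integral do rewrite (Fn_step hj).
by rewrite int_ind ?(Fn_succ hj) //; exact: Gn_ge0.
Qed.

Lemma claim (a b : 'rV[R]_d) (A B : nat -> 'rV[R]_d)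
  (hab : forall i, (a 0 i <= b 0 i)%R) (hAB : forall k i, (A k 0 i <= B k 0 i)%R) :
  (forall x, (Fn 0 a b x)%:E <= \sum_(k <oo) (Fn 0 (A k) (B k) x)%:E) ->
  forall n, (n <= d)%N -> forall x,
    (Fn n a b x)%:E <= \sum_(k <oo) (Fn n (A k) (B k) x)%:E.
Proof.
move=> h0; elim=> [_ //|n IH hn x].
have hnd : (n < d)%N := hn.
pose j := Ordinal hnd.
have hj : nat_of_ord j = n by [].
rewrite -(intFn hj) //.
apply: (@le_trans _ _ (\int[lebesgue_measure]_(t in setT)
     \sum_(k <oo) (Fn n (A k) (B k) (upd j x t))%:E)).
  apply: ge0_le_integral => //.
  - by move=> t _; rewrite lee_fin Fn_ge0.
  - exact: mFn.
  - apply: ge0_emeasurable_sum.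
      by move=> k t _ _; rewrite lee_fin Fn_ge0.
    by move=> k _; exact: mFn.
  - by move=> t _; apply: IH; exact: ltnW.
rewrite integral_nneseries //.
- apply: lee_nneseries.
    by move=> k _ _; apply: integral_ge0 => t _; rewrite lee_fin Fn_ge0.
  by move=> k _; rewrite (intFn hj).
- by move=> k; exact: mFn.
- by move=> k t _; rewrite lee_fin Fn_ge0.
Qed.
End Claim.
Section Cover.
Variables (R : realType) (d : nat).
Local Open Scope ereal_scope.

Lemma Fn0_in (a b x : 'rV[R]_d) : hbox a b x -> Fn 0 a b x = 1%R.
Proof.
move=> hx; rewrite /Fn [X in (_ * X)%R]big_pred0 // mulr1 big1 // => i _.
by rewrite /ind hx.
Qed.

Lemma Fn0_out (a b x : 'rV[R]_d) : ~ hbox a b x -> Fn 0 a b x = 0%R.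
Proof.
move=> hx; have [i hi] : exists i, ~~ (a 0 i <= x 0 i < b 0 i)%R.
  apply: contrapT => hn; apply: hx => i; apply: contrapT => hi.
  by apply: hn; exists i; apply/negP.
by rewrite /Fn (bigD1 i) //= /ind (negbTE hi) !mul0r.
Qed.

Lemma Fnd (a b x : 'rV[R]_d) : Fn d a b x = (\prod_(i < d) (b 0 i - a 0 i))%R.
Proof.
rewrite /Fn [X in (X * _)%R]big_pred0 ?mul1r; last by move=> i; rewrite leqNgt ltn_ord.
by apply: eq_bigl => i; rewrite ltn_ord.
Qed.

Lemma hbox_cover_vol (a b : 'rV[R]_d) (A B : nat -> 'rV[R]_d)
  (hab : forall i, (a 0 i <= b 0 i)%R) (hAB : forall k i, (A k 0 i <= B k 0 i)%R) :
  hbox a b `<=` \bigcup_k hbox (A k) (B k) ->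
  (\prod_(i < d) (b 0 i - a 0 i))%:E <=
    \sum_(k <oo) (\prod_(i < d) (B k 0 i - A k 0 i))%:E.
Proof.
move=> cov; rewrite -(Fnd a b 0).
under eq_eseriesr do rewrite -(Fnd _ _ 0).
apply: (claim hab hAB) => // x.
have [hx|hx] := pselect (hbox a b x); last first.
  by rewrite Fn0_out // nneseries_ge0 // => k _ _; rewrite lee_fin Fn_ge0.
rewrite Fn0_in //; have [k _ hk] := cov x hx.
apply: le_trans (nneseries_lim_ge k.+1 _ ) => //; last first.
  by move=> m _ _; rewrite lee_fin Fn_ge0.
rewrite big_nat_recr //= Fn0_in // leeDr // sume_ge0 // => m _.
by rewrite lee_fin Fn_ge0.
Qed.
End Cover.
Section Content.
Variables (R : realType) (d : nat).

Lemma upd_in (a b x : 'rV[R]_d) (i : 'I_d) (t : R) :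
  hbox a b x -> (a 0 i <= t < b 0 i)%R -> hbox a b (upd i x t).
Proof.
move=> hx ht k; rewrite /upd mxE; case: eqP => [->|_] //; exact: hx.
Qed.

Lemma hbox_bounds (a b a' b' x : 'rV[R]_d) : hbox a b x -> hbox a b `<=` hbox a' b' ->
  forall i, (a' 0 i <= a 0 i)%R /\ (b 0 i <= b' 0 i)%R.
Proof.
move=> hx sub i; have /andP[h1 h2] := hx i.
have ab : (a 0 i < b 0 i)%R by exact: le_lt_trans h2.
split.
  have := sub _ (upd_in hx (t := a 0 i) (i := i) _).
  by rewrite lexx ab => /(_ erefl i) /andP[+ _]; rewrite /upd mxE eqxx.
rewrite leNgt; apply/negP => hb.
pose t := Num.max (a 0 i) (b' 0 i).
have ht : (a 0 i <= t < b 0 i)%R by rewrite le_max lexx /= gt_max ab hb.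
have := sub _ (upd_in hx ht) i; rewrite /upd mxE eqxx => /andP[_].
by rewrite /t ltNge le_max lexx orbT.
Qed.

Lemma hbox_eq (a b a' b' x : 'rV[R]_d) : hbox a b x -> hbox a b = hbox a' b' ->
  a = a' /\ b = b'.
Proof.
move=> hx e.
have hx' : hbox a' b' x by rewrite -e.
have s1 := hbox_bounds hx (a' := a') (b' := b') (ltac:(by rewrite e)).
have s2 := hbox_bounds hx' (a' := a) (b' := b) (ltac:(by rewrite e)).
split; apply/rowP => i; apply: le_anti.
  by rewrite (s2 i).1 (s1 i).1.
by rewrite (s2 i).2 (s1 i).2.
Qed.

Lemma box_content_fin (hd : (0 < d)%N) (F : set (Rd_all R d)) :
  box_content F = +oo%E \/ exists a b : 'rV[R]_d, (forall i, (a 0 i <= b 0 i)%R) /\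
     F = hbox a b /\ box_content F = (\prod_(i < d) (b 0 i - a 0 i))%:E.
Proof.
rewrite /box_content; case: asboolP => [F0|F0].
  right; exists 0, 0; split => [i|]; first by rewrite lexx.
  split.
    rewrite F0; apply/seteqP; split => x //= /(_ (Ordinal hd)).
    by rewrite !mxE => /andP[h1 h2]; have := le_lt_trans h1 h2; rewrite ltxx.
  by rewrite (bigD1 (Ordinal hd)) //= !mxE subrr mul0r.
have [[a [b [ab Fab]]]|nb] := pselect (exists a b : 'rV[R]_d, (forall i, (a 0 i <= b 0 i)%R) /\ F = hbox a b); last first.
  left; apply/ereal_inf_pinfty => y [[a b] /= [ab Fab] _].
  by exfalso; apply: nb; exists a, b.
right; exists a, b; split => //; split => //.
have [x Fx] : exists x, F x.
  apply: contrapT => h; apply: F0; apply/seteqP; split => y // Fy.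
  by apply: h; exists y.
apply: le_anti; apply/andP; split.
  by apply: ereal_inf_lbound; exists (a, b).
apply: le_ereal_inf_tmp => _ [[a' b'] /= [ab' Fab'] <-].
have [<- <-] := hbox_eq (a := a) (b := b) (x := x) (a' := a') (b' := b') (ltac:(by rewrite -Fab)) (ltac:(by rewrite -Fab)).
by [].
Qed.
End Content.
Section Outer.
Variables (R : realType) (d : nat).
Local Open Scope ereal_scope.

Lemma outer_hbox_ge (hd : (0 < d)%N) (a b : 'rV[R]_d) (hab : forall i, (a 0 i <= b 0 i)%R) :
  (\prod_(i < d) (b 0 i - a 0 i))%:E <= @lebesgue_outer R d (hbox a b).
Proof.
rewrite /lebesgue_outer /mu_ext; apply: le_ereal_inf_tmp => _ [F [mF cov] <-].
have [[k hk]|] := pselect (exists k, box_content (F k) = +oo).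
  by rewrite (eseries_pinfty _ _ hk) ?leey // => n _; rewrite gt_eqF // (lt_le_trans _ (box_content_ge0 _)).
move=> nk.
have : forall k, exists AB : 'rV[R]_d * 'rV[R]_d, (forall i, (AB.1 0 i <= AB.2 0 i)%R) /\
     F k = hbox AB.1 AB.2 /\ box_content (F k) = (\prod_(i < d) (AB.2 0 i - AB.1 0 i))%:E.
  move=> k; case: (box_content_fin hd (F k)) => [h|[A [B [h1 [h2 h3]]]]].
    by exfalso; apply: nk; exists k.
  by exists (A, B).
move=> /choice [AB hAB].
rewrite (eq_eseriesr (fun k _ => (hAB k).2.2)).
apply: (hbox_cover_vol hab (fun k => (hAB k).1)).
by move=> x /cov [k _ hk]; exists k => //; rewrite -(hAB k).2.1.
Qed.

Lemma box_content_le (a b : 'rV[R]_d) (hab : forall i, (a 0 i <= b 0 i)%R) :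
  box_content (hbox a b : set (Rd_all R d)) <= (\prod_(i < d) (b 0 i - a 0 i))%:E.
Proof.
rewrite /box_content; case: asboolP => _.
  by rewrite lee_fin prodr_ge0 // => i _; rewrite subr_ge0.
by apply: ereal_inf_lbound; exists (a, b).
Qed.

Lemma outer_le_content (A : set (Rd_all R d)) : @lebesgue_outer R d A <= box_content A.
Proof.
rewrite /lebesgue_outer /mu_ext; apply: ereal_inf_lbound.
exists (fun k => if k == 0%N then A else set0).
  by split => // x Ax; exists 0%N.
rewrite (nneseries_split 0 1); last by move=> k _; exact: box_content_ge0.
rewrite add0n eseries0 ?adde0; last by move=> [|i] //= _ _; exact: box_content0.
by rewrite big_nat1.
Qed.

Lemma outer_hbox_le (a b : 'rV[R]_d) (hab : forall i, (a 0 i <= b 0 i)%R) :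
  @lebesgue_outer R d (hbox a b) <= (\prod_(i < d) (b 0 i - a 0 i))%:E.
Proof. exact: le_trans (outer_le_content _) (box_content_le hab). Qed.
End Outer.
Section Cara.
Variables (R : realType) (d : nat).

Definition hs (i : 'I_d) (c : R) : set 'rV[R]_d := [set x | x 0 i < c].
Definition clip (a b c : R) := Num.min b (Num.max a c).

Lemma hbox_splitL (a b : 'rV[R]_d) i c :
  hbox a b `&` hs i c = hbox a (upd i b (clip (a 0 i) (b 0 i) c)).
Proof.
apply/seteqP; split => x.
  move=> [hx hc] k; rewrite /upd mxE; case: eqP => [->|_]; last exact: hx.
  have /andP[h1 h2] := hx i.
  by rewrite h1 /clip lt_min h2 lt_max hc orbT.
move=> hx; have := hx i; rewrite /upd mxE eqxx /clip lt_min lt_max => /andP[h1 /andP[h2 h3]].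
split; last by move: h3; rewrite /hs /=; case/orP => // /(le_lt_trans h1); rewrite ltxx.
move=> k; have := hx k; rewrite /upd mxE; case: eqP => [->|_] //.
by rewrite h1 h2.
Qed.

Lemma hbox_splitR (a b : 'rV[R]_d) i c :
  hbox a b `&` ~` hs i c = hbox (upd i a (clip (a 0 i) (b 0 i) c)) b.
Proof.
apply/seteqP; split => x.
  move=> [hx hc] k; rewrite /upd mxE; case: eqP => [->|_]; last exact: hx.
  have /andP[h1 h2] := hx i.
  move/negP: hc; rewrite -leNgt => hc.
  by rewrite h2 andbT /clip ge_min ge_max h1 hc orbT.
move=> hx; have := hx i; rewrite /upd mxE eqxx /clip ge_min ge_max => /andP[h1 h2].
have [h3 h4] : a 0 i <= x 0 i /\ c <= x 0 i.
  case/orP: h1 => [/(lt_le_trans h2)|/andP[//]].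
  by rewrite ltxx.
split.
  move=> k; have := hx k; rewrite /upd mxE; case: eqP => [->|_] //.
  by rewrite h2 h3.
by rewrite /hs /= ltNge h4.
Qed.
End Cara.
Section Cara2.
Variables (R : realType) (d : nat).

Lemma clip_ge (a b c : R) : a <= b -> a <= clip a b c.
Proof. by move=> ab; rewrite /clip le_min ab le_max lexx. Qed.
Lemma clip_le (a b c : R) : clip a b c <= b.
Proof. by rewrite /clip ge_min lexx. Qed.

Lemma vol_split (a b : 'rV[R]_d) i (c : R) :
  \prod_(k < d) (upd i b c 0 k - a 0 k) + \prod_(k < d) (b 0 k - upd i a c 0 k) =
  \prod_(k < d) (b 0 k - a 0 k).
Proof.
rewrite (bigD1 i) // [X in _ + X](bigD1 i) // [RHS](bigD1 i) //= !mxE eqxx.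
have e1 : \prod_(k < d | k != i) (upd i b c 0 k - a 0 k) = \prod_(k < d | k != i) (b 0 k - a 0 k).
  by apply: eq_bigr => k /negbTE ki; rewrite mxE ki.
have e2 : \prod_(k < d | k != i) (b 0 k - upd i a c 0 k) = \prod_(k < d | k != i) (b 0 k - a 0 k).
  by apply: eq_bigr => k /negbTE ki; rewrite mxE ki.
rewrite e1 e2 -mulrDl; congr (_ * _).
by rewrite addrC addrA subrK.
Qed.

Local Open Scope ereal_scope.

Lemma content_split (hd : (0 < d)%N) (F : set (Rd_all R d)) i c :
  box_content (F `&` hs i c) + box_content (F `&` ~` hs i c) <= box_content F.
Proof.
case: (box_content_fin hd F) => [->|[a [b [hab [-> ->]]]]]; first by rewrite leey.
rewrite hbox_splitL hbox_splitR.
rewrite -(vol_split a b i (clip (a 0%R i) (b 0%R i) c)) EFinD; apply: leeD.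
  apply: box_content_le => k; rewrite /upd mxE; case: eqP => [->|_] //.
  exact: clip_ge.
apply: box_content_le => k; rewrite /upd mxE; case: eqP => [->|_] //.
exact: clip_le.
Qed.

Lemma outer_split (hd : (0 < d)%N) (X : set (Rd_all R d)) i c :
  @lebesgue_outer R d (X `&` hs i c) + @lebesgue_outer R d (X `&` ~` hs i c)
    <= @lebesgue_outer R d X.
Proof.
rewrite {3}/lebesgue_outer /mu_ext; apply: le_ereal_inf_tmp => _ [F [mF cov] <-].
apply: (@le_trans _ _ (\sum_(k <oo) box_content (F k `&` hs i c) +
                       \sum_(k <oo) box_content (F k `&` ~` hs i c))).
  apply: leeD; apply: ereal_inf_lbound; (eexists; last reflexivity); split => //.
    by move=> x [/cov [k _ hk] hx]; exists k.
  by move=> x [/cov [k _ hk] hx]; exists k.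
rewrite -nneseriesD; last 2 first.
- by move=> k _ _; exact: box_content_ge0.
- by move=> k _ _; exact: box_content_ge0.
apply: lee_nneseries => [k _ _|k _]; last exact: content_split.
by apply: adde_ge0; exact: box_content_ge0.
Qed.

Lemma hs_measurable (hd : (0 < d)%N) i c : measurable (hs i c : set (Rd R d)).
Proof.
apply: le_caratheodory_measurable => X.
exact: outer_split.
Qed.
End Cara2.
Section Cube.
Variables (R : realType) (d : nat).

Definition cb (a : 'rV[R]_d) (l : R) : 'rV[R]_d := \row_(i < d) (a 0 i + l).

Lemma cube_hbox (a : 'rV[R]_d) l : cube a l = hbox a (cb a l).
Proof. by apply/seteqP; split => x hx i; have := hx i; rewrite /cb mxE. Qed.

Lemma cube_measurable (hd : (0 < d)%N) (a : 'rV[R]_d) l : measurable (cube a l : set (Rd R d)).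
Proof.
have -> : cube a l = \bigcap_(i in [set: 'I_d]) (~` hs i (a 0 i) `&` hs i (a 0 i + l)).
  apply/seteqP; split => x.
    by move=> hx i _; have /andP[h1 h2] := hx i; split => //; rewrite /hs /= ltNge h1.
  move=> hx i; have [h1 h2] := hx i I; move: h1; rewrite /hs /= ltNge => /negP/negPn ->.
  exact: h2.
apply: fin_bigcap_measurable; first exact: finite_finset.
by move=> i _; apply: measurableI; [apply: measurableC|]; exact: hs_measurable.
Qed.

Lemma prod_cb (a : 'rV[R]_d) l : \prod_(i < d) (cb a l 0 i - a 0 i) = l ^+ d.
Proof.
under eq_bigr do rewrite /cb mxE addrC addKr.
by rewrite prodr_const card_ord.
Qed.

Lemma cb_ge (a : 'rV[R]_d) l : 0 <= l -> forall i, a 0 i <= cb a l 0 i.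
Proof. by move=> l0 i; rewrite /cb mxE lerDl. Qed.

Lemma cube_vol_eq (hd : (0 < d)%N) (a : 'rV[R]_d) l : 0 <= l ->
  @lebesgue_Rd R d (cube a l) = (@cube_vol R d l)%:E.
Proof.
move=> l0; apply: le_anti; apply/andP; split; rewrite cube_hbox /cube_vol -(prod_cb a l).
  exact: (outer_hbox_le (cb_ge a l0)).
exact: (outer_hbox_ge hd (cb_ge a l0)).
Qed.

Lemma translate_cube (a z : 'rV[R]_d) l : translate_set (cube a l) z = cube (a + z) l.
Proof.
apply/seteqP; split => x hx i; have := hx i; rewrite !mxE.
  by rewrite lerBrDr ltrBlDr addrAC.
by rewrite lerBrDr ltrBlDr addrAC.
Qed.
End Cube.
Section Main.
Variables (R : realType) (d : nat).
Hypothesis hd : (0 < d)%N.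
Variables (inX : set (Rd R d -> R)) (nX : (Rd R d -> R) -> R)
  (Top : (Rd R d -> R) -> Rd R d -> R) (C N : R).
Hypothesis hX : quasi_banach_function_space inX nX.
Hypothesis hT : nondegenerate_op Top C.
Hypothesis hB : bounded_to_weak inX nX Top N.

Local Notation mu := (@lebesgue_Rd R d).
Local Notation Rd := (Rd R d).

Lemma sup_arg (c y M : R) : 0 <= y -> 0 <= M ->
  (forall lam, 0 < lam -> lam < c -> lam * y <= M) -> c * y <= M.
Proof.
move=> y0 M0 h.
have [->|yp] := eqVneq y 0; first by rewrite mulr0.
have yp' : 0 < y by rewrite lt_neqAle eq_sym yp y0.
apply/ler_ltP => z zc.
have [z0|zp] := lerP z 0; first exact: le_trans z0 M0.
have := h (z / y) (divr_gt0 zp yp') _.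
rewrite divfK //; apply.
by rewrite ltr_pdivrMr.
Qed.

Lemma indic_ge0' (A : set Rd) x : 0 <= (\1_A x : R).
Proof. by rewrite indicE. Qed.

Lemma indic1 (A : set Rd) x : A x -> (\1_A x : R) = 1.
Proof. by move=> Ax; rewrite indicE mem_set. Qed.
Lemma indic0 (A : set Rd) x : ~ A x -> (\1_A x : R) = 0.
Proof. by move=> nA; rewrite indicE memNset. Qed.

Lemma ideal_ind (A B : set Rd) : measurable A -> inX (\1_B) -> A `<=` B ->
  inX (\1_A) /\ nX (\1_A) <= nX (\1_B).
Proof.
move=> mA iB AB; apply: (qbfs_ideal hX) => //.
apply: aeW => x; rewrite !indicE.
case: (boolP (x \in A)) => xA; last by rewrite normr0.
have xB : x \in B by rewrite inE; apply: AB; rewrite inE in xA.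
by rewrite xB.
Qed.

Lemma cube_inX (a : 'rV[R]_d) l : 0 < l -> inX (\1_(cube a l)).
Proof.
move=> l0; have [C0 /(_ l l0) [xl hxl]] := hT.
have mQ' : measurable (cube (a - xl) l : set Rd) := cube_measurable hd (a - xl) l.
have muQ' := cube_vol_eq hd (a - xl) (ltW l0).
have [F [mF FQ' muF0 inF]] := qbfs_saturation hX mQ'
  (ltac:(by rewrite muQ' lte_fin /cube_vol exprn_gt0)).
have muFle : (mu F <= mu (cube (a - xl) l))%E.
  by apply: le_measure => //; rewrite inE.
have muFfin : mu F \is a fin_num.
  rewrite ge0_fin_numE ?measure_ge0 //; apply: le_lt_trans muFle _.
  by rewrite muQ' ltry.
set s := fine (mu F).
have muFs : mu F = s%:E by rewrite /s fineK.
have s0 : 0 < s by rewrite -lte_fin -muFs.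
have key : forall x, cube a l x -> C / @cube_vol R d l * s <= `|Top (\1_F) x|.
  move=> x Qx; rewrite -lee_fin EFinM -muFs.
  have <- : (\int[mu]_(y in cube (a - xl) l) (\1_F y)%:E = mu F)%E.
    by rewrite integral_indic // setIidl.
  apply: hxl.
  - by move=> y; exact: indic_ge0'.
  - move=> y nQ; rewrite indicE; case: (boolP (y \in F)) => // yF.
    by exfalso; apply: nQ; apply: FQ'; rewrite inE in yF.
  - apply/integrableP; split.
      by apply: measurable_funTS; apply/measurable_EFinP; exact: measurable_indic.
    rewrite (eq_integral (fun y => (\1_F y)%:E)); last first.
      by move=> y _ /=; rewrite ger0_norm ?indic_ge0'.
    by rewrite integral_indic // setIidl // muFs ltry.
  - by left; rewrite translate_cube subrK.
have lam0 : 0 < C / @cube_vol R d l * s / 2.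
  by rewrite divr_gt0 // mulr_gt0 // divr_gt0 // /cube_vol exprn_gt0.
have [_ hw _] := (hB inF).1.
have iS := hw _ lam0.
apply: (ideal_ind _ iS _).1; first exact: cube_measurable.
move=> x Qx /=; apply: lt_le_trans (key x Qx).
by rewrite ltr_pdivrMr // ltr_pMr ?ltr1n // mulr_gt0 // divr_gt0 // /cube_vol exprn_gt0.
Qed.

Lemma nX_cube_pos (a : 'rV[R]_d) l : 0 < l -> 0 < nX (\1_(cube a l)).
Proof.
move=> l0; have i := cube_inX a l0.
have := qbfs_ge0 hX i; rewrite le_eqVlt => /orP [/eqP h|//].
exfalso; have [A [mA muA0 sub]] := (qbfs_definite hX i).1 (esym h).
have QA : cube a l `<=` A.
  move=> x Qx; apply: sub => /=; rewrite indicE mem_set //= => /eqP.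
  by rewrite oner_eq0.
have : (mu (cube a l) <= mu A)%E.
  by apply: le_measure => //; rewrite inE //; exact: cube_measurable.
rewrite muA0 (cube_vol_eq hd a (ltW l0)) leNgt => /negP; apply.
by rewrite lte_fin /cube_vol exprn_gt0.
Qed.

Lemma N_ge0 : 0 <= N.
Proof.
have l0 : (0 : R) < 1 by [].
have i := cube_inX 0 l0.
have [[_ hw _] hle] := hB i.
have h1 := qbfs_ge0 hX (hw 1 l0).
have : ((1 * nX (\1_[set x | 1 < `|Top (\1_(cube 0 1)) x|]))%:E <= (N * nX (\1_(cube 0 1)))%:E)%E.
  apply: le_trans hle; apply: ereal_sup_ubound; by exists 1.
rewrite lee_fin mul1r => h2.
by rewrite -(pmulr_lge0 _ (nX_cube_pos 0 l0)); exact: le_trans h2.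
Qed.

Lemma weak_step (h : Rd -> R) (A : set Rd) (c : R) : inX h -> measurable A -> 0 < c ->
  (forall x, A x -> c <= `|Top h x|) -> c * nX (\1_A) <= N * nX h.
Proof.
move=> ih mA c0 hA.
have [[_ hw _] hle] := hB ih.
have c20 : 0 < c / 2 by rewrite divr_gt0.
have sub : forall lam, lam < c -> A `<=` [set x | lam < `|Top h x|].
  by move=> lam lc x Ax; exact: lt_le_trans lc (hA x Ax).
have c2c : c / 2 < c by rewrite ltr_pdivrMr // ltr_pMr // ltr1n.
have [iA _] := ideal_ind mA (hw _ c20) (sub _ c2c).
apply: sup_arg; first by apply: (qbfs_ge0 hX); exact: iA.
  exact: mulr_ge0 N_ge0 (qbfs_ge0 hX ih).
move=> lam l0 lc.
have [_ le1] := ideal_ind mA (hw _ l0) (sub _ lc).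
apply: le_trans (ler_wpM2l (ltW l0) le1) _.
rewrite -lee_fin; apply: le_trans hle.
by apply: ereal_sup_ubound; exists lam.
Qed.


Lemma int_indic_cube (a : 'rV[R]_d) l (A : set Rd) : 0 <= l -> measurable A -> A `<=` cube a l ->
  mu.-integrable (cube a l) (EFin \o \1_A) /\
  (\int[mu]_(y in cube a l) (\1_A y)%:E = mu A)%E.
Proof.
move=> l0 mA AQ.
have eA : (\int[mu]_(y in cube a l) (\1_A y)%:E = mu A)%E.
  by rewrite integral_indic //; [rewrite setIidl | exact: cube_measurable].
split => //; apply/integrableP; split.
  by apply: measurable_funTS; apply/measurable_EFinP; exact: measurable_indic.
rewrite (eq_integral (fun y => (\1_A y)%:E)); last first.
  by move=> y _ /=; rewrite ger0_norm ?indic_ge0'.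
rewrite eA; apply: le_lt_trans (_ : (mu (cube a l) < +oo)%E).
  by apply: le_measure => //; rewrite inE //; exact: cube_measurable.
by rewrite (cube_vol_eq hd a l0) ltry.
Qed.

Lemma core (a : 'rV[R]_d) (l r : R) (g : Rd -> R) : 0 < l -> inX g ->
  (forall x, 0 <= g x) -> (forall x, ~ cube a l x -> g x = 0) ->
  mu.-integrable (cube a l) (EFin \o g) ->
  (\int[mu]_(y in cube a l) (g y)%:E = r%:E)%E ->
  C ^+ 2 * (r / @cube_vol R d l) * nX (\1_(cube a l)) <= N ^+ 2 * nX g.
Proof.
move=> l0 ig g0 gout gint gr.
have [C0 /(_ l l0) [xl hxl]] := hT.
have vl0 : 0 < @cube_vol R d l by rewrite /cube_vol exprn_gt0.
have r0 : 0 <= r.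
  by rewrite -lee_fin -gr; apply: integral_ge0 => y _; rewrite lee_fin.
have nQ := qbfs_ge0 hX (cube_inX a l0).
have ng := qbfs_ge0 hX ig.
have N0 := N_ge0.
have [rle|rpos] := lerP r 0.
  have -> : r = 0 by apply: le_anti; rewrite rle r0.
  by rewrite mul0r mulr0 mul0r; apply: mulr_ge0 => //; exact: exprn_ge0.
have c10 : 0 < C / @cube_vol R d l * r by rewrite mulr_gt0 // divr_gt0.
have h1 : forall x, cube (a + xl) l x -> C / @cube_vol R d l * r <= `|Top g x|.
  move=> x Qx; rewrite -lee_fin EFinM -gr; apply: hxl => //.
  by left; rewrite translate_cube.
have mQ2 : measurable (cube (a + xl) l : set Rd) := cube_measurable hd (a + xl) l.
have h2 : forall x, cube a l x -> C <= `|Top (\1_(cube (a + xl) l)) x|.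
  move=> x Qx.
  have [ii ie] := int_indic_cube (ltW l0) mQ2 (@subset_refl _ (cube (a + xl) l)).
  have out : forall y, ~ cube (a + xl) l y -> \1_(cube (a + xl) l) y = 0 :> R.
    by move=> y ny; rewrite indicE memNset.
  have tr : translate_set (cube (a + xl) l) xl x \/ translate_set (cube (a + xl) l) (- xl) x.
    by right; rewrite translate_cube addrK.
  have := hxl (a + xl) (\1_(cube (a + xl) l)) (indic_ge0' _) out ii x tr.
  rewrite ie (cube_vol_eq hd (a + xl) (ltW l0)) -EFinM lee_fin divfK //.
  by rewrite gt_eqF.
have s1 := weak_step ig mQ2 c10 h1.
have s2 := weak_step (cube_inX (a + xl) l0) (cube_measurable hd a l) C0 h2.
have nQ2 := qbfs_ge0 hX (cube_inX (a + xl) l0).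
rewrite (_ : C ^+ 2 * (r / @cube_vol R d l) * nX (\1_(cube a l)) =
   (C / @cube_vol R d l * r) * (C * nX (\1_(cube a l)))); last first.
  by rewrite expr2 !mulrA; congr (_ * _); rewrite mulrAC -!mulrA; congr (_ * _); rewrite mulrC mulrA.
apply: le_trans (ler_wpM2l (ltW c10) s2) _.
rewrite mulrCA expr2 -[N * N * _]mulrA; apply: ler_wpM2l => //.
Qed.

Lemma alg (r v c2 n M : R) : 0 < v -> 0 < c2 -> 0 < n ->
  c2 * (r / v) * n <= M -> r <= M / c2 * v / n.
Proof.
move=> v0 c0 n0 h.
have e : r = (c2 * (r / v) * n) * (v / (c2 * n)).
  by field; rewrite !gt_eqF.
rewrite e (_ : M / c2 * v / n = M * (v / (c2 * n))); last first.
  by field; rewrite !gt_eqF.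
by apply: ler_wpM2r => //; rewrite divr_ge0 ?mulr_ge0 // ltW.
Qed.

Lemma kothe_bound (a : 'rV[R]_d) l (f : Rd -> R) : 0 < l -> inX f -> nX f = 1 ->
  (\int[mu]_x (`|f x * \1_(cube a l) x|)%:E <=
    (N ^+ 2 / C ^+ 2 * @cube_vol R d l / nX (\1_(cube a l)))%:E)%E.
Proof.
move=> l0 iF nf1.
have [C0 _] := hT.
have mQ : measurable (cube a l : set Rd) := cube_measurable hd a l.
have vl0 : 0 < @cube_vol R d l by rewrite /cube_vol exprn_gt0.
have nQ0 := nX_cube_pos a l0.
have mf := qbfs_measurable hX iF.
pose gn (n : nat) x := Num.min `|f x| n%:R * (\1_(cube a l) x : R).
have mabs : measurable_fun setT (fun x => `|f x|) :=
  measurableT_comp (@normr_measurable R setT) mf.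
have mI : measurable_fun setT (\1_(cube a l) : Rd -> R) by exact: measurable_indic.
have mgn n : measurable_fun setT (gn n).
  have mc : measurable_fun setT (cst (n%:R : R) : Rd -> R) by exact: measurable_cst.
  exact: measurable_funM (measurable_minr mabs mc) mI.
have gn0 n x : 0 <= gn n x.
  by apply: mulr_ge0; [rewrite le_min normr_ge0 ler0n | exact: indic_ge0'].
have gnf n x : gn n x <= `|f x|.
  rewrite /gn indicE; case: (x \in cube a l); rewrite ?mulr1 ?mulr0 //.
  by rewrite ge_min lexx.
have ign n : inX (gn n) /\ nX (gn n) <= nX f.
  apply: (qbfs_ideal hX) => //; apply: aeW => x.
  by rewrite ger0_norm ?gn0 // gnf.
have gout n x : ~ cube a l x -> gn n x = 0.
  by move=> nx; rewrite /gn indicE memNset // mulr0.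
have gle n : (\int[mu]_(y in cube a l) (gn n y)%:E <= n%:R%:E * mu (cube a l))%E.
  rewrite -integral_cst //; apply: ge0_le_integral => //.
  - by move=> y _; rewrite lee_fin.
  - by apply: measurable_funTS; apply/measurable_EFinP.
  - by move=> y Qy; rewrite lee_fin /gn indic1 // mulr1 ge_min lexx orbT.
have muQ := cube_vol_eq hd a (ltW l0).
have gfin n : (\int[mu]_(y in cube a l) (gn n y)%:E)%E \is a fin_num.
  rewrite ge0_fin_numE; last by apply: integral_ge0 => y _; rewrite lee_fin.
  by apply: le_lt_trans (gle n) _; rewrite muQ -EFinM ltry.
have gint n : mu.-integrable (cube a l) (EFin \o gn n).
  apply/integrableP; split.
    by apply: measurable_funTS; apply/measurable_EFinP.
  rewrite (eq_integral (fun y => (gn n y)%:E)); last first.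
    by move=> y _ /=; rewrite ger0_norm.
  by rewrite ltey_eq gfin.
have bnd n : (\int[mu]_(y in cube a l) (gn n y)%:E <=
    (N ^+ 2 / C ^+ 2 * @cube_vol R d l / nX (\1_(cube a l)))%:E)%E.
  rewrite -(fineK (gfin n)) lee_fin.
  apply: alg => //; first exact: exprn_gt0.
  apply: le_trans (core l0 (ign n).1 (gn0 n) (gout n) (gint n) (esym (fineK (gfin n)))) _.
  rewrite -[X in _ <= X]mulr1 -nf1.
  by apply: ler_wpM2l; [exact: exprn_ge0 N_ge0 | exact: (ign n).2].
have gmono x m n : (m <= n)%N -> gn m x <= gn n x.
  move=> mn; rewrite /gn; apply: ler_wpM2r; first exact: indic_ge0'.
  by rewrite le_min !ge_min lexx /= ler_nat mn orbT.
rewrite (_ : (\int[mu]_x (`|f x * \1_(cube a l) x|)%:E =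
    \int[mu]_(x in cube a l) (`|f x|)%:E)%E); last first.
  rewrite [RHS]integral_mkcond; apply: eq_integral => x _ /=; rewrite /patch.
  case: (boolP (x \in cube a l)) => xQ.
    by rewrite indic1 ?mulr1 //; rewrite inE in xQ.
  rewrite indic0 ?mulr0 ?normr0 // => h.
  by rewrite (mem_set h) in xQ.
rewrite (eq_integral (fun x => limn (fun n => (gn n x)%:E))); last first.
  move=> x xQ; rewrite inE in xQ; apply/esym/lim_near_cst.
  by [].
  exists (Num.truncn `|f x|).+1 => // n /= hn.
  rewrite /gn indic1 // mulr1 min_l //.
  apply: le_trans (ltW (truncnS_gt _)) _; by rewrite ler_nat.
rewrite monotone_convergence //.
- apply: lime_le.
    apply: ereal_nondecreasing_is_cvgn => m n mn; apply: ge0_le_integral => //.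
    + by move=> y _; rewrite lee_fin.
    + by apply: measurable_funTS; apply/measurable_EFinP.
    + by apply: measurable_funTS; apply/measurable_EFinP.
    + by move=> y _; rewrite lee_fin gmono.
  by apply: nearW => n; exact: bnd n.
- by move=> n; apply: measurable_funTS; apply/measurable_EFinP.
- by move=> n x _; rewrite lee_fin.
- by move=> x _ m n mn; rewrite lee_fin gmono.
Qed.

Lemma kothe_le (a : 'rV[R]_d) l : 0 < l ->
  (kothe_norm inX nX (\1_(cube a l)) <=
    (N ^+ 2 / C ^+ 2 * @cube_vol R d l / nX (\1_(cube a l)))%:E)%E.
Proof.
move=> l0; apply: ge_ereal_sup => _ [f [iF nf] <-]; exact: kothe_bound.
Qed.

Lemma main_res : in_A inX nX /\ (A_const inX nX <= (C ^-2 * N ^+ 2)%:E)%E.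
Proof.
have [C0 _] := hT.
split.
  move=> a l l0; split; first exact: cube_inX.
  split; first by apply: (qbfs_measurable hX); exact: cube_inX.
  by apply: le_lt_trans (kothe_le a l0) _; rewrite ltry.
apply: ge_ereal_sup => _ [[a l] /= l0 <-].
have vl0 : 0 < @cube_vol R d l by rewrite /cube_vol exprn_gt0.
have nQ0 := nX_cube_pos a l0.
apply: le_trans (lee_wpmul2l _ (kothe_le a l0)) _.
  by rewrite lee_fin mulr_ge0 // ?invr_ge0 ltW.
rewrite -EFinM lee_fin le_eqVlt; apply/orP; left; apply/eqP.
by field; rewrite !gt_eqF.
Qed.
End Main.

Theorem proposition3p4 (R : realType) (d : nat) (hd : (0 < d)%N)
    (inX : set (Rd R d -> R)) (nX : (Rd R d -> R) -> R)
    (Top : (Rd R d -> R) -> Rd R d -> R) (C N : R) :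
  quasi_banach_function_space inX nX ->
  fatou_property inX nX ->
  sublinear_on inX Top ->
  nondegenerate_op Top C ->
  bounded_to_weak inX nX Top N ->
  in_A inX nX /\ (A_const inX nX <= (C ^-2 * N ^+ 2)%:E)%E.
Proof.
move=> hX _ _ hT hB; exact: (main_res hd hX hT hB).
Qed.
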